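(* Let $r\ge 2$ and $x\ge 2$ be integers, let $G$ be a $K_r$-free graph on $x$ vertices, and let $\mathcal I$ denote the number of independent sets of $G$ (including the empty set). Then $$\log \mathcal I\;\ge\;\max\left(\frac{x^{1/r}}{2},\ \frac{\log^2 x}{18\log(2r)}\right).$$
   Context: A graph is $K_r$-free if it contains no $r$ pairwise adjacent vertices. Logarithms are base 2. *)

(* Defs.v *)
From mathcomp Require Import all_boot.
From Stdlib Require Import Reals.

Set Implicit Arguments.
Unset Strict Implicit.
Unset Printing Implicit Defensive.

Definition simple_graph (T : finType) (e : rel T) : Prop :=
  symmetric e /\ irreflexive e.

Definition is_clique (T : finType) (e : rel T) (S : {set T}) : bool :=
  [forall x in S, forall y in S, (x != y) ==> e x y].

Definition is_independent (T : finType) (e : rel T) (S : {set T}) : bool :=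
  [forall x in S, forall y in S, ~~ e x y].

Definition Kr_free (T : finType) (e : rel T) (r : nat) : Prop :=
  forall S : {set T}, #|S| = r -> ~~ is_clique e S.

Definition num_indep (T : finType) (e : rel T) : nat :=
  #|[set S : {set T} | is_independent e S]|.

Definition log2 (y : R) : R := (ln y / ln 2)%R.

(* Main.v *)
Require Import Defs.
From mathcomp Require Import all_boot.
From Stdlib Require Import Reals.
From Stdlib Require Import Lra Lia ZArith.
From mathcomp Require Import zify.
From mathcomp Require Import ssrnat.
Set Implicit Arguments.
Unset Strict Implicit.

Definition nb (T : finType) (e : rel T) (v : T) : {set T} := [set w | e v w].

Lemma clique_ext (T : finType) (e : rel T) (v : T) (S : {set T}) :
  simple_graph e -> S \subset nb e v -> is_clique e S -> is_clique e (v |: S).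
Proof.
move=> [sy ir] sub /forallP cl; apply/forallP=> a; apply/implyP=> Ha.
apply/forallP=> b; apply/implyP=> Hb; apply/implyP.
move: Ha Hb; rewrite !in_setU1 => /orP[/eqP->|Ha] /orP[/eqP->|Hb] nab.
- by rewrite eqxx in nab.
- by move/subsetP: sub => /(_ b Hb); rewrite inE.
- by rewrite sy; move/subsetP: sub => /(_ a Ha); rewrite inE.
- by move: (cl a); rewrite Ha /= => /forallP /(_ b); rewrite Hb nab.
Qed.

Lemma indep_ext (T : finType) (e : rel T) (v : T) (S : {set T}) :
  simple_graph e -> (forall w, w \in S -> ~~ e v w) -> is_independent e S ->
  is_independent e (v |: S).
Proof.
move=> [sy ir] nv /forallP cl; apply/forallP=> a; apply/implyP=> Ha.
apply/forallP=> b; apply/implyP=> Hb.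
move: Ha Hb; rewrite !in_setU1 => /orP[/eqP->|Ha] /orP[/eqP->|Hb].
- by rewrite ir.
- exact: nv.
- by rewrite sy; apply: nv.
- by move: (cl a); rewrite Ha /= => /forallP /(_ b); rewrite Hb.
Qed.

Definition noclique (T : finType) (e : rel T) r (U : {set T}) :=
  forall S : {set T}, S \subset U -> #|S| = r -> ~~ is_clique e S.
Definition noindep (T : finType) (e : rel T) t (U : {set T}) :=
  forall S : {set T}, S \subset U -> #|S| = t -> ~~ is_independent e S.

Lemma clique1 (T : finType) (e : rel T) v : is_clique e [set v].
Proof.
apply/forallP=> a; apply/implyP; rewrite inE=> /eqP->.
apply/forallP=> b; apply/implyP; rewrite inE=> /eqP->; by rewrite eqxx.
Qed.

Lemma indep1 (T : finType) (e : rel T) v : irreflexive e -> is_independent e [set v].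
Proof.
move=> ir; apply/forallP=> a; apply/implyP; rewrite inE=> /eqP->.
apply/forallP=> b; apply/implyP; rewrite inE=> /eqP->; by rewrite ir.
Qed.

Lemma ramsey (T : finType) (e : rel T) : simple_graph e ->
  forall n a b (U : {set T}), a + b = n -> noclique e a.+1 U -> noindep e b.+1 U ->
  #|U| < 'C(a + b, a).
Proof.
move=> sg; have [sy ir] := sg.
elim=> [|n IH] a b U Hn ncl nin.
- have Ha0 : a = 0 by lia.
  subst a.
  case: (set_0Vmem U) => [->|[v Hv]]; first by rewrite cards0 bin0.
  have := ncl [set v]; rewrite sub1set Hv cards1 => /(_ isT erefl).
  by rewrite clique1.
case: (set_0Vmem U) => [->|[v Hv]]; first by rewrite cards0 bin_gt0 leq_addr.
case: a Hn ncl => [|a] Hn ncl.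
  by have := ncl [set v]; rewrite sub1set Hv cards1 => /(_ isT erefl); rewrite clique1.
case: b Hn nin => [|b] Hn nin.
  by have := nin [set v]; rewrite sub1set Hv cards1 => /(_ isT erefl); rewrite indep1.
set N := (U :\ v) :&: nb e v.
set M := (U :\ v) :\: nb e v.
have HN : #|N| < 'C(a + b.+1, a).
  apply: (IH a b.+1); first lia.
  - move=> S sS cS; apply/negP=> clS.
    have vS : v \notin S.
      apply/negP=> vS; move/subsetP: sS => /(_ v vS); by rewrite !inE eqxx /= ?andbF.
    have := ncl (v |: S); rewrite cardsU1 vS cS.
    have -> : v |: S \subset U.
      rewrite subUset sub1set Hv; apply: subset_trans sS _.
      by apply: subset_trans (subsetIl _ _) (subD1set _ _).
    move=> /(_ isT erefl); rewrite clique_ext //.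
    by apply: subset_trans sS (subsetIr _ _).
  - move=> S sS cS; apply: nin => //; apply: subset_trans sS _.
    by apply: subset_trans (subsetIl _ _) (subD1set _ _).
have HM : #|M| < 'C(a.+1 + b, a.+1).
  apply: (IH a.+1 b); first lia.
  - move=> S sS cS; apply: ncl => //; apply: subset_trans sS _.
    by apply: subset_trans (subsetDl _ _) (subD1set _ _).
  - move=> S sS cS; apply/negP=> inS.
    have vS : v \notin S.
      apply/negP=> vS; move/subsetP: sS => /(_ v vS); by rewrite !inE eqxx /= ?andbF.
    have := nin (v |: S); rewrite cardsU1 vS cS.
    have -> : v |: S \subset U.
      rewrite subUset sub1set Hv; apply: subset_trans sS _.
      by apply: subset_trans (subsetDl _ _) (subD1set _ _).
    move=> /(_ isT erefl); rewrite indep_ext //.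
    move=> w wS; move/subsetP: sS => /(_ w wS).
    by rewrite !inE; case: (e v w); rewrite ?andbF.
have HU : #|U| = (#|N| + #|M|).+1.
  by rewrite (cardsD1 v U) Hv /N /M cardsID.
rewrite HU.
have -> : a.+1 + b.+1 = (a + b.+1).+1 by lia.
rewrite binS.
move: HM; have -> : a.+1 + b = a + b.+1 by lia.
lia.
Qed.

Lemma binle a b : 'C(a + b, a) <= (b.+1) ^ a.
Proof.
elim: a => [|a IH]; first by rewrite bin0.
have H := mul_bin_diag (a.+1 + b) a.
rewrite addSn /= in H.
rewrite addSn -(leq_pmul2l (ltn0Sn a)) -H expnS.
move: IH; set C := 'C(_, _); set P := _ ^ a; nia.
Qed.

Lemma bin_ge a b : 0 < a -> b.+1 <= 'C(a + b, a).
Proof.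
case: a => // a _; elim: a => [|a IH]; first by rewrite bin1 add1n.
rewrite addSn binS; lia.
Qed.

Lemma binratio R x t : R <= x -> 'C(R, t) * x ^ t <= 'C(x, t) * R ^ t.
Proof.
move=> Rx; elim: t => [|t IH]; first by rewrite !bin0.
rewrite -(leq_pmul2l (ltn0Sn t)) !mulnA !mul_bin_left !expnS.
have H : (R - t) * x <= (x - t) * R by rewrite !mulnBl mulnC; apply: leq_sub2l; apply: leq_mul.
move: IH H; set c1 := 'C(R, t); set c2 := 'C(x, t); set p1 := x ^ t; set p2 := R ^ t.
set d1 := R - t; set d2 := x - t => IH H.
have E1 : d1 * c1 * (x * p1) = (d1 * x) * (c1 * p1) by nia.
have E2 : d2 * c2 * (R * p2) = (d2 * R) * (c2 * p2) by nia.
rewrite E1 E2; exact: leq_mul.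
Qed.

Definition PS (T : finType) (e : rel T) t (U : {set T}) : {set {set T}} :=
  [set A : {set T} | (A \subset U) && (#|A| == t) && is_independent e A].

Lemma PS_rem (T : finType) (e : rel T) t (U : {set T}) v :
  #|PS e t (U :\ v)| = \sum_(A in PS e t U) (v \notin A).
Proof.
rewrite -sum1_card big_mkcond /= [RHS]big_mkcond /=.
apply: eq_bigr => A _; rewrite !inE.
have -> : (A \subset U :\ v) = (A \subset U) && (v \notin A).
  apply/idP/andP.
  - move=> sA; split; first by apply: subset_trans sA (subD1set _ _).
    by apply/negP=> vA; move/subsetP: sA => /(_ v vA); rewrite !inE eqxx.
  - move=> [sA nvA]; apply/subsetP=> w wA; rewrite !inE (subsetP sA w wA) andbT.
    by apply/negP=> /eqP ew; rewrite -ew wA in nvA.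
by case: (A \subset U); case: (v \in A); case: (#|A| == t); case: (is_independent e A).
Qed.

Lemma PS_double (T : finType) (e : rel T) t (U : {set T}) :
  \sum_(v in U) #|PS e t (U :\ v)| = (#|U| - t) * #|PS e t U|.
Proof.
under eq_bigr => v _ do rewrite PS_rem.
rewrite exchange_big /= -[#|PS e t U|]sum1_card big_distrr /=.
apply: eq_bigr => A; rewrite inE => /andP[/andP[sA /eqP cA] _].
rewrite muln1 -cA.
have -> : #|U| - #|A| = #|U :\: A| by rewrite cardsD (setIidPr sA).
by rewrite -sum1_card big_mkcond /= [RHS]big_mkcond /=; apply: eq_bigr => v _; rewrite !inE andbC; case: (v \in A); case: (v \in U).
Qed.

Lemma supersat (T : finType) (e : rel T) r' t' : simple_graph e -> 0 < r' ->
  noclique e r'.+1 [set: T] ->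
  forall k (U : {set T}), #|U| = 'C(r' + t', r') + k ->
  'C('C(r' + t', r') + k, t'.+1) <= #|PS e t'.+1 U| * 'C('C(r' + t', r'), t'.+1).
Proof.
move=> sg r0 ncl.
set R := 'C(r' + t', r').
have tR : t'.+1 <= R by apply: bin_ge.
have nclU : forall U : {set T}, noclique e r'.+1 U.
  by move=> U S _ cS; apply: ncl => //; apply: subsetT.
elim=> [|k IH] U HU.
- rewrite addn0; case: (set_0Vmem (PS e t'.+1 U)) => [P0|[A HA]].
  + have : #|U| < R.
      apply: (ramsey sg (erefl _) (nclU U)).
      move=> S sS cS; apply/negP=> iS.
      have : S \in PS e t'.+1 U by rewrite inE sS cS eqxx iS.
      by rewrite P0 inE.
    by rewrite HU addn0 ltnn.
  + have : 0 < #|PS e t'.+1 U| by apply/card_gt0P; exists A.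
    by move=> h; rewrite leq_pmull.
- set n := R + k.+1.
  have tn : t'.+1 < n by rewrite /n; lia.
  have Hs : \sum_(v in U) 'C(n.-1, t'.+1) <= \sum_(v in U) (#|PS e t'.+1 (U :\ v)| * 'C(R, t'.+1)).
    apply: leq_sum => v vU; have := IH (U :\ v).
    have -> : n.-1 = R + k by rewrite /n; lia.
    apply; rewrite (cardsD1 v U) vU in HU; lia.
  rewrite -big_distrl /= PS_double sum_nat_const HU -/n mul_bin_down in Hs.
  have p0 : 0 < n - t'.+1 by rewrite subn_gt0.
  by rewrite -(leq_pmul2l p0) mulnA.
Qed.

Lemma Kr_noclique (T : finType) (e : rel T) r U : Kr_free e r -> noclique e r U.
Proof. by move=> H S _ cS; apply: H. Qed.

Lemma PS_le (T : finType) (e : rel T) t U : #|PS e t U| <= num_indep e.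
Proof.
apply: subset_leq_card; apply/subsetP=> A; rewrite !inE; by case/andP.
Qed.

Lemma Rle_bin r' t' : 'C(r' + t', r') <= r'.+1 ^ t'.
Proof.
have -> : 'C(r' + t', r') = 'C(t' + r', t').
  have h := bin_sub (leq_addl t' r').
  by rewrite addnK in h; rewrite h addnC.
exact: binle.
Qed.

Lemma count_bound (T : finType) (e : rel T) r' t' : simple_graph e -> 0 < r' ->
  Kr_free e r'.+1 -> r'.+1 ^ t' <= #|T| ->
  #|T| ^ t'.+1 <= num_indep e * (r'.+1 ^ t') ^ t'.+1.
Proof.
move=> sg r0 kf Hx.
set R := 'C(r' + t', r').
have RR : R <= r'.+1 ^ t' := Rle_bin r' t'.
have Rx : R <= #|T| by apply: leq_trans RR Hx.
have tR : t'.+1 <= R by apply: bin_ge.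
have := @supersat T e r' t' sg r0 (Kr_noclique (U := [set: T]) kf) (#|T| - R) [set: T].
rewrite cardsT subnKC // => /(_ erefl) H1.
have H2 := binratio t'.+1 Rx.
have cpos : 0 < 'C(R, t'.+1) by rewrite bin_gt0.
have H3 : 'C(R, t'.+1) * #|T| ^ t'.+1 <= 'C(R, t'.+1) * (num_indep e * R ^ t'.+1).
  apply: leq_trans H2 _; rewrite [X in _ <= X]mulnA [X in _ <= X * _]mulnC.
  apply: leq_mul => //; apply: leq_trans H1 _; apply: leq_mul => //; exact: PS_le.
rewrite leq_pmul2l // in H3; apply: leq_trans H3 _.
apply: leq_mul => //; by rewrite leq_exp2r.
Qed.

Lemma indep_sub (T : finType) (e : rel T) (A B : {set T}) :
  A \subset B -> is_independent e B -> is_independent e A.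
Proof.
move=> sAB /forallP H; apply/forallP=> a; apply/implyP=> Ha.
apply/forallP=> b; apply/implyP=> Hb.
have := H a; rewrite (subsetP sAB a Ha) /= => /forallP /(_ b).
by rewrite (subsetP sAB b Hb).
Qed.

Lemma indep0 (T : finType) (e : rel T) : is_independent e set0.
Proof. by apply/forallP=> a; rewrite inE. Qed.

Lemma alpha_bound (T : finType) (e : rel T) r' : simple_graph e -> 0 < r' ->
  Kr_free e r'.+1 -> 2 <= #|T| ->
  exists a, [/\ 0 < a, #|T| <= (2 * a) ^ r'.+1 & 2 ^ a <= num_indep e].
Proof.
move=> sg r0 kf x2; have [sy ir] := sg.
case: (@arg_maxnP _ set0 (fun S => is_independent e S) (fun S => #|S|) (indep0 e))
  => S0 iS0 mx.
exists #|S0|.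
have a0 : 0 < #|S0|.
  have [v _] : exists v : T, true.
    by move: x2; case: (set_0Vmem [set: T]) => [h|[v _]]; [rewrite -cardsT h cards0 | exists v].
  by have := mx [set v] (indep1 v ir); rewrite cards1.
split => //.
- have HT : #|[set: T]| < 'C(r' + #|S0|, r').
    apply: (ramsey sg (erefl _) (Kr_noclique (U := [set: T]) kf)).
    move=> S _ cS; apply/negP=> iS; have := mx S iS; rewrite cS; lia.
  rewrite cardsT in HT; apply: leq_trans (ltnW (leq_trans HT (binle _ _))) _.
  apply: (@leq_trans ((2 * #|S0|) ^ r')).
    by rewrite leq_exp2r //; lia.
  apply: leq_pexp2l => //; lia.
- rewrite -card_powerset; apply: subset_leq_card; apply/subsetP=> A.
  rewrite !inE => sA; exact: indep_sub sA iS0.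
Qed.

Lemma x_le_I (T : finType) (e : rel T) : simple_graph e -> #|T| <= num_indep e.
Proof.
move=> [sy ir].
have -> : #|T| = #|[set [set v] | v : T]|.
  by rewrite card_imset //; apply: set1_inj.
apply: subset_leq_card; apply/subsetP=> A /imsetP [v _ ->].
rewrite inE; exact: indep1.
Qed.

Lemma natR_exp (m n : nat) : INR (expn m n) = (INR m ^ n)%R.
Proof.
elim: n => [|n IH]; first by rewrite expn0.
by rewrite expnS -multE mult_INR IH.
Qed.

Lemma natR_le (m n : nat) : (m <= n)%N -> (INR m <= INR n)%R.
Proof. by move/leP; apply: le_INR. Qed.

Lemma ln_le' (a b : R) : (0 < a)%R -> (a <= b)%R -> (ln a <= ln b)%R.
Proof.
move=> a0 ab; case: (Rle_lt_or_eq_dec _ _ ab) => [h|->]; last by apply: Rle_refl.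
by apply: Rlt_le; apply: ln_increasing.
Qed.

Lemma div_ge (u v k : R) : (0 < k)%R -> (u * k <= v)%R -> (u <= v / k)%R.
Proof.
move=> k0 h; apply: (Rmult_le_reg_r k) => //.
unfold Rdiv; rewrite Rmult_assoc Rinv_l; lra.
Qed.

Lemma floor_nat (y : R) : (0 <= y)%R -> exists n : nat, (INR n <= y < INR n + 1)%R.
Proof.
move=> y0; have [h1 h2] := archimed y.
have z1 : (1 <= up y)%Z.
  have : (0 < IZR (up y))%R by lra.
  move/lt_IZR; lia.
exists (Z.to_nat (up y - 1)).
rewrite INR_IZR_INZ Z2Nat.id; last lia.
rewrite minus_IZR; lra.
Qed.

Theorem mainTheorem3 (r x : nat) (T : finType) (e : rel T) :
  (2 <= r)%N -> (2 <= x)%N -> #|T| = x ->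
  simple_graph e -> Kr_free e r ->
  (Rmax (Rpower (INR x) (1 / INR r) / 2)
        (log2 (INR x) ^ 2 / (18 * log2 (2 * INR r)))
   <= log2 (INR (num_indep e)))%R.
Proof.
move=> r2 x2 Tx sg kf.
case: r r2 kf => [|r'] // r2 kf.
have r0 : (0 < r')%N by [].
have ln2 := ln_lt_2.
have X2 : (2 <= INR x)%R by have := natR_le x2.
have NX : (INR x <= INR (num_indep e))%R by rewrite -Tx; apply: natR_le; apply: x_le_I.
set N := INR (num_indep e) in NX *.
set X := INR x in X2 NX *.
have lnX : (0 < ln X)%R.
  rewrite -ln_1; apply: ln_increasing; lra.
apply: Rmax_lub.
-
  have [a [a0 Ha Hb]] := alpha_bound sg r0 kf (ltac:(by rewrite Tx)).
  rewrite Tx in Ha.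
  have aR : (1 <= INR a)%R by have := natR_le a0.
  have H1 : (Rpower X (1 / INR r'.+1) <= 2 * INR a)%R.
    have rpos : (0 < INR r'.+1)%R by apply: lt_0_INR; lia.
    have : (X <= (2 * INR a) ^ r'.+1)%R.
      by have := natR_le Ha; rewrite natR_exp -multE mult_INR.
    move=> h.
    apply: Rle_trans (Rle_Rpower_l _ _ (1 / INR r'.+1) _ (conj _ h)) _.
    + apply: Rlt_le; apply: Rdiv_lt_0_compat; lra.
    + lra.
    + rewrite -Rpower_pow; last lra.
      rewrite Rpower_mult.
      have -> : (INR r'.+1 * (1 / INR r'.+1) = 1)%R by field; lra.
      rewrite Rpower_1; lra.
  have H2 : (INR a <= log2 N)%R.
    unfold log2; apply: div_ge => //; first lra.
    have : (2 ^ a <= N)%R by have := natR_le Hb; rewrite natR_exp.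
    move=> h; rewrite -ln_pow; last lra.
    apply: ln_le' => //; apply: pow_lt; lra.
  lra.
-
  set l := ln X in lnX *.
  set c := ln (2 * INR r'.+1).
  have rR : (2 <= INR r'.+1)%R by have := natR_le r2.
  have lnr : (ln (INR r'.+1) <= c)%R.
    apply: ln_le'; lra.
  have lnr0 : (0 < ln (INR r'.+1))%R.
    rewrite -ln_1; apply: ln_increasing; lra.
  have c0 : (0 < c)%R by lra.
  have [t [t1 t2]] := @floor_nat (l / (2 * c))%R (ltac:(apply: Rlt_le; apply: Rdiv_lt_0_compat; lra)).
  have t0 : (0 <= INR t)%R by apply: pos_INR.
  have tc : (INR t * c <= l / 2)%R.
    have : (INR t * (2 * c) <= l)%R.
      apply: (Rmult_le_reg_r (/ (2 * c))); first by apply: Rinv_0_lt_compat; lra.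
      rewrite Rmult_assoc Rinv_r; last lra.
      rewrite Rmult_1_r; exact: t1.
    lra.
  have tl : (INR t * ln (INR r'.+1) <= l)%R by nra.
  have Hx : (r'.+1 ^ t <= #|T|)%N.
    case: (leqP (r'.+1 ^ t) #|T|) => // h.
    exfalso; have := natR_le h; rewrite Tx => h'.
    have : (ln (X + 1) <= ln (INR r'.+1 ^ t))%R.
      apply: ln_le'; first lra.
      by rewrite -natR_exp -S_INR.
    rewrite ln_pow; last lra.
    have : (l < ln (X + 1))%R by apply: ln_increasing; lra.
    lra.
  have Hc := count_bound sg r0 kf Hx.
  rewrite Tx in Hc.
  have Hc' : (INR t.+1 * l <= ln N + INR t.+1 * (INR t * ln (INR r'.+1)))%R.
    have h := natR_le Hc.
    rewrite -multE mult_INR !natR_exp -/X -/N in h.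
    have Npos : (0 < N)%R by lra.
    have hp : (0 < X ^ t.+1)%R by apply: pow_lt; lra.
    have := ln_le' hp h.
    rewrite ln_mult //; last by apply: pow_lt; apply: pow_lt; lra.
    rewrite ln_pow; last lra.
    rewrite ln_pow; last by apply: pow_lt; lra.
    rewrite ln_pow; last lra.
    by move=> hh; exact: hh.
  have St : (INR t.+1 = INR t + 1)%R by rewrite S_INR.
  rewrite St in Hc'.
  have key : (l ^ 2 / (18 * c) <= ln N)%R.
    have e1 : (l ^ 2 / (18 * c) = l * (l / (2 * c)) / 9)%R by field; lra.
    rewrite e1.
    have lp : (0 <= l)%R by lra.
    have h3 : (l * (l / (2 * c)) <= l * (INR t + 1))%R.
      apply: Rmult_le_compat_l => //; lra.
    have h4 : ((INR t + 1) * (INR t * ln (INR r'.+1)) <= (INR t + 1) * (l / 2))%R.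
      have tl2 : (INR t * ln (INR r'.+1) <= INR t * c)%R.
        apply: Rmult_le_compat_l => //.
      apply: Rmult_le_compat_l; lra.
    nra.
  unfold log2; rewrite -/l -/c.
  have e2 : ((l / ln 2) ^ 2 / (18 * (c / ln 2)) =
             (l ^ 2 / (18 * c)) / ln 2)%R.
    field; split; lra.
  rewrite e2; unfold Rdiv at 1 3.
  apply: Rmult_le_compat_r; last exact: key.
  apply: Rlt_le; apply: Rinv_0_lt_compat; lra.
Qed.
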